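(* Let $A$ be a minimal $n$-state nondeterministic finite automaton accepting a non-empty language that is prefix-free, suffix-free, or infix-free. Then the minimal deterministic finite automaton accepting $L(A)$ has at least $n+1$ states.
   Context: NFAs have a single initial state and a transition function $\delta:Q\times\Sigma\to 2^Q$ that may map to the empty set (no sink state is needed or counted); DFAs are complete, so a sink state is counted. A minimal $n$-state NFA is an NFA with $n$ states such that no NFA with fewer states accepts the same language. With $\Sigma^+=\Sigma^*\setminus\{\lambda\}$: $L\subseteq\Sigma^*$ is prefix-free if $y\in L$ implies $yz\notin L$ for all $z\in\Sigma^+$; suffix-free if $y\in L$ implies $xy\notin L$ for all $x\in\Sigma^+$; infix-free if $y\in L$ implies $xyz\notin L$ for all $x,z\in\Sigma^*$ with $xz\in\Sigma^+$. *)

(* Defs.v *)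
From mathcomp Require Import all_boot.
Set Implicit Arguments.
Unset Strict Implicit.
Unset Printing Implicit Defensive.

Record nfa (S : finType) (n : nat) := NFA {
  nfa_init : 'I_n;
  nfa_delta : 'I_n -> S -> {set 'I_n};
  nfa_final : {set 'I_n} }.

Definition nfa_reach (S : finType) (n : nat) (A : nfa S n)
    (P : {set 'I_n}) (w : seq S) : {set 'I_n} :=
  foldl (fun (P : {set 'I_n}) (a : S) => \bigcup_(q in P) nfa_delta A q a) P w.

Definition nfa_accepts (S : finType) (n : nat) (A : nfa S n) (w : seq S) : bool :=
  [exists q in nfa_reach A [set nfa_init A] w, q \in nfa_final A].

(* complete DFA with m states (a sink state, if any, is among the m). *)
Record dfa (S : finType) (m : nat) := DFA {
  dfa_init : 'I_m;
  dfa_delta : 'I_m -> S -> 'I_m;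
  dfa_final : {set 'I_m} }.

Definition dfa_accepts (S : finType) (m : nat) (D : dfa S m) (w : seq S) : bool :=
  foldl (dfa_delta D) (dfa_init D) w \in dfa_final D.

Definition minimal_nfa (S : finType) (n : nat) (A : nfa S n) : Prop :=
  forall (m : nat) (B : nfa S m),
    (forall w, nfa_accepts B w = nfa_accepts A w) -> n <= m.

Definition prefix_free (S : finType) (L : seq S -> bool) : Prop :=
  forall y z : seq S, L y -> z != [::] -> ~~ L (y ++ z).

Definition suffix_free (S : finType) (L : seq S -> bool) : Prop :=
  forall x y : seq S, L y -> x != [::] -> ~~ L (x ++ y).

Definition infix_free (S : finType) (L : seq S -> bool) : Prop :=
  forall x y z : seq S, L y -> x ++ z != [::] -> ~~ L (x ++ y ++ z).

(* Main.v *)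
Require Import Defs.
From mathcomp Require Import all_boot.
From Stdlib Require Import Classical.

Lemma reach0 (S : finType) (n : nat) (B : nfa S n) w : nfa_reach B set0 w = set0.
Proof.
elim: w => [|a w IH] //=.
rewrite /nfa_reach /= big_set0. exact: IH.
Qed.

Lemma dead_exists (S : finType) (m : nat) (D : dfa S m) (a : S) :
  (exists w, dfa_accepts D w) ->
  prefix_free (dfa_accepts D) \/ suffix_free (dfa_accepts D) ->
  exists q, forall z, foldl (dfa_delta D) q z \notin dfa_final D.
Proof.
move=> [w Hw] [Hp|Hs].
  exists (foldl (dfa_delta D) (dfa_init D) (w ++ [:: a])) => z.
  rewrite -foldl_cat -catA /=.
  exact: (Hp w (a :: z) Hw).
apply: NNPP => Hn.
have Hall : forall q, exists z, foldl (dfa_delta D) q z \in dfa_final D.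
  move=> q; apply: NNPP => Hq; apply: Hn; exists q => z.
  apply/negP => Hz; apply: Hq; by exists z.
pose f := fun k : 'I_m.+1 => foldl (dfa_delta D) (dfa_init D) (nseq k a).
have Hni : ~ injective f.
  move=> Hinj; have := @leq_card _ _ f Hinj; by rewrite !card_ord ltnn.
have [i [j [Hij Hne]]] : exists i j, f i = f j /\ i <> j.
  apply: NNPP => H; apply: Hni => i j Hij.
  apply: NNPP => Hne; apply: H; by exists i, j.
wlog Hlt : i j Hij Hne / (i < j)%N.
  move=> Hw'; case: (ltngtP i j) => H.
  - exact: Hw' i j Hij Hne H.
  - apply: (Hw' j i) => //; by apply: not_eq_sym.
  - by apply: Hne; apply: val_inj.
have [z Hz] := Hall (f i).
have := Hs (nseq (j - i) a) (nseq i a ++ z).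
rewrite /dfa_accepts foldl_cat -/(f i) Hz => /(_ isT).
have -> : nseq (j - i) a != [::] by rewrite -size_eq0 size_nseq subn_eq0 -ltnNge.
move=> /(_ isT); rewrite catA -nseqD subnK ?(ltnW Hlt) // foldl_cat.
by rewrite -/(f j) -Hij Hz.
Qed.

Lemma remove_dead (S : finType) (m : nat) (D : dfa S m.+1) (q : 'I_m.+1) :
  (forall z, foldl (dfa_delta D) q z \notin dfa_final D) ->
  dfa_init D != q ->
  exists B : nfa S m, forall w, nfa_accepts B w = dfa_accepts D w.
Proof.
move=> Hd Hi.
have Hi' : q != dfa_init D by rewrite eq_sym.
have [p0 Hp0 _] := unlift_some Hi'.
pose dl := fun (p : 'I_m) (a : S) =>
  match unlift q (dfa_delta D (lift q p) a) with
  | Some p' => [set p'] | None => set0 end.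
pose B := NFA p0 dl [set p | lift q p \in dfa_final D].
have claim : forall w p, [exists x in nfa_reach B [set p] w, x \in nfa_final B]
   = (foldl (dfa_delta D) (lift q p) w \in dfa_final D).
  elim => [|a w IH] p.
    rewrite /nfa_reach /=.
    apply/existsP/idP => [[x /andP [/set1P -> ]]|H]; first by rewrite inE.
    by exists p; rewrite set11 inE.
  rewrite /nfa_reach /= big_set1 /= -/(nfa_reach B _ w).
  rewrite /dl.
  case: unliftP => [p'|] ->.
    by rewrite -IH.
  rewrite reach0 (negbTE (Hd w)).
  by apply/existsP => [[x]]; rewrite inE.
exists B => w.
by rewrite /nfa_accepts /dfa_accepts claim -Hp0.
Qed.

Theorem mainTheorem4 (S : finType) (n : nat) (A : nfa S n) :
  0 < #|S| ->
  minimal_nfa A ->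
  (exists w, nfa_accepts A w) ->
  prefix_free (nfa_accepts A) \/ suffix_free (nfa_accepts A) \/
    infix_free (nfa_accepts A) ->
  forall (m : nat) (D : dfa S m),
    (forall w, dfa_accepts D w = nfa_accepts A w) -> n.+1 <= m.
Proof.
move=> /card_gt0P [a _] Hmin [w Hw] Hfree m D HD.
have HDe : dfa_accepts D =1 nfa_accepts A := HD.
have Hne : exists w, dfa_accepts D w by exists w; rewrite HD.
have Hf : prefix_free (dfa_accepts D) \/ suffix_free (dfa_accepts D).
  case: Hfree => [Hp|[Hs|Hi]].
  - by left => y z; rewrite !HD; apply: Hp.
  - by right => x y; rewrite !HD; apply: Hs.
  - right => x y; rewrite !HD => Hy Hx.
    by have := Hi x y [::] Hy; rewrite !cats0; apply.
have [q Hq] := @dead_exists _ _ D a Hne Hf.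
case: m D HD HDe Hne Hf q Hq => [|m] D HD HDe Hne Hf q Hq.
  by case: (dfa_init D).
have Hi : dfa_init D != q.
  apply/eqP => E; case: Hne => w' Hw'.
  by move: (Hq w'); rewrite -E /dfa_accepts in Hw' *; rewrite Hw'.
have [B HB] := @remove_dead _ _ D q Hq Hi.
apply: (Hmin m B) => w'; by rewrite HB HD.
Qed.
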